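(* Let $(\alpha,\beta)\in Q$, let $x^*=\lim_kx_k$ for the GAFS sequence, and let $N=\{i: x^*_i=0\}$, $B=\{i: x^*_i>0\}$. There exist $\delta>0$ and $R>0$ such that for each $k\ge0$ $$\frac{c^Tx_k-c^Tx^*}{\|x_k-x^*\|}\ge\frac1R,\qquad \frac{c^Tx_k-c^Tx^*}{\sum_{i\in N}(x_k)_i}\ge\delta,\qquad \frac{c^Tx_k-c^Tx^*}{\sum_{i\in B}|(x_k)_i-x^*_i|}\ge\delta.$$
   Context: Let $A\in\mathbb{R}^{m\times n}$ have rank $m$, $b\in\mathbb{R}^m$, $c\in\mathbb{R}^n$. Primal LP: $\min c^Tx$ s.t. $Ax=b$, $x\ge 0$. Standing assumptions: the primal has a strictly positive feasible point; $c^Tx$ is not constant on the primal feasible region; the LP has an optimal solution. For $u\in\mathbb{R}^n$, $\gamma(u)=\max\{u_i: u_i>0\}$; $\|\cdot\|$ Euclidean norm. For $x>0$, $X=\mathrm{diag}(x)$. GAFS sequence: fix $\alpha\in(0,1)$, $\beta\in[0,1)$, and $x_0>0$ with $Ax_0=b$. For $k\ge0$ let $X_k=\mathrm{diag}(x_k)$, $y_k=(AX_k^2A^T)^{-1}AX_k^2c$, $s_k=c-A^Ty_k$. Set $x_1=x_0-\alpha\frac{X_0^2s_0}{\gamma(X_0s_0)}$ and, for $k\ge1$, $x_{k+1}=x_k-\alpha\frac{X_k^2s_k}{\gamma(X_ks_k)}+\beta\frac{x_k-x_{k-1}}{\|X_k^{-1}(x_k-x_{k-1})\|_\infty}$ (all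 quantities assumed well defined). $Q=\{(\alpha,\beta): 0<\alpha<1,\ 0\le\beta<1/\phi,\ \alpha+\beta\le 2/3\}$ with $\phi=(1+\sqrt5)/2$. *)

(* Defs.v *)
(* The real numbers are modelled by an arbitrary
   Archimedean real closed field R. *)
From HB Require Import structures.
From mathcomp Require Import all_boot all_order all_algebra.
Set Implicit Arguments. Unset Strict Implicit. Unset Printing Implicit Defensive.
Import Order.TTheory GRing.Theory Num.Theory.
Local Open Scope ring_scope.

Section GAFS.
Variables (R : archiRcfType) (m n : nat).
Implicit Types (x u d c : 'cV[R]_n) (A : 'M[R]_(m, n)).

Definition Xsq x : 'M[R]_n := diag_mx (\row_i (x i 0 ^+ 2)).

Definition dual_y A c x : 'cV[R]_m :=
  invmx (A *m Xsq x *m A^T) *m (A *m Xsq x *m c).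

Definition slack A c x : 'cV[R]_n := c - A^T *m dual_y A c x.

Definition Xmul x u : 'cV[R]_n := \col_i (x i 0 * u i 0).

(* gamma(u) = max { u_i : u_i > 0 } (equal to the max of the u_i and 0;
   it is the paper's gamma whenever some u_i > 0) *)
Definition gam u : R := \big[Num.max/0]_(i < n) u i 0.

Definition ninf_scaled x d : R := \big[Num.max/0]_(i < n) `| d i 0 / x i 0 |.

Definition enorm u : R := Num.sqrt (\sum_(i < n) u i 0 ^+ 2).

Definition afs_step A c (alpha : R) x : 'cV[R]_n :=
  - ((alpha / gam (Xmul x (slack A c x))) *: (Xsq x *m slack A c x)).

(* pairs (x_k, x_{k+1}) *)
Fixpoint gafs_pair A c (alpha beta : R) x0 (k : nat) : 'cV[R]_n * 'cV[R]_n :=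
  match k with
  | 0 => (x0, x0 + afs_step A c alpha x0)
  | k'.+1 =>
      let p := gafs_pair A c alpha beta x0 k' in
      let xp := p.1 in let xk := p.2 in
      (xk, xk + afs_step A c alpha xk
              + (beta / ninf_scaled xk (xk - xp)) *: (xk - xp))
  end.

Definition gafs A c alpha beta x0 (k : nat) : 'cV[R]_n :=
  (gafs_pair A c alpha beta x0 k).1.

Definition feasible A (b : 'cV[R]_m) x : Prop :=
  A *m x = b /\ forall i, 0 <= x i 0.

Definition cost c x : R := (c^T *m x) 0 0.

End GAFS.

Definition phi (R : rcfType) : R := (1 + Num.sqrt 5) / 2.

Definition inQ (R : rcfType) (alpha beta : R) : Prop :=
  0 < alpha < 1 /\ 0 <= beta /\ beta < 1 / phi R /\ alpha + beta <= 2 / 3.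

(* Main.v *)
Require Import Defs.
From HB Require Import structures.
From mathcomp Require Import all_boot all_order all_algebra.
From mathcomp Require Import ring lra.
Set Implicit Arguments. Unset Strict Implicit. Unset Printing Implicit Defensive.
Import Order.TTheory GRing.Theory Num.Theory.
Local Open Scope ring_scope.
From Stdlib Require Import Classical.

Definition L1 (R : realDomainType) n (v : 'cV[R]_n) : R := \sum_i `|v i 0|.
Definition cd (R : realDomainType) n (c v : 'cV[R]_n) : R := \sum_i c i 0 * v i 0.

Lemma L1_ge0 (R : realDomainType) n (v : 'cV[R]_n) : 0 <= L1 v.
Proof. by apply: sumr_ge0 => i _. Qed.

Lemma L1D (R : realDomainType) n (v w : 'cV[R]_n) : L1 (v + w) <= L1 v + L1 w.
Proof. rewrite /L1 -big_split /=; apply: ler_sum => i _; rewrite mxE; exact: ler_normD. Qed.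

Lemma L1Z (R : realDomainType) n a (v : 'cV[R]_n) : L1 (a *: v) = `|a| * L1 v.
Proof. rewrite /L1 mulr_sumr; apply: eq_bigr => i _; by rewrite mxE normrM. Qed.

Lemma cdD (R : realDomainType) n (c v w : 'cV[R]_n) : cd c (v + w) = cd c v + cd c w.
Proof. rewrite /cd -big_split /=; apply: eq_bigr => i _; by rewrite mxE mulrDr. Qed.

Lemma cdZ (R : realDomainType) n (c : 'cV[R]_n) a v : cd c (a *: v) = a * cd c v.
Proof. rewrite /cd mulr_sumr; apply: eq_bigr => i _; rewrite mxE; ring. Qed.

Lemma cdN (R : realDomainType) n (c v : 'cV[R]_n) : cd c (- v) = - cd c v.
Proof. by rewrite -scaleN1r cdZ mulN1r. Qed.

Lemma cdB (R : realDomainType) n (c v w : 'cV[R]_n) : cd c (v - w) = cd c v - cd c w.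
Proof. by rewrite cdD cdN. Qed.

Lemma cost_cd (R : archiRcfType) n (c v : 'cV[R]_n) : cost c v = cd c v.
Proof. rewrite /cost /cd !mxE; apply: eq_bigr => i _; by rewrite mxE. Qed.

Lemma sum_sq_le (R : realDomainType) (I : Type) (s : seq I) (f : I -> R) :
  \sum_(i <- s) f i ^+ 2 <= (\sum_(i <- s) `|f i|) ^+ 2.
Proof.
elim: s => [|a s IH]; first by rewrite !big_nil expr0n.
rewrite !big_cons.
have h0 : 0 <= \sum_(i <- s) `|f i| by apply: sumr_ge0.
have ha : 0 <= `|f a| by [].
have -> : f a ^+ 2 = `|f a| ^+ 2 by rewrite real_normK ?num_real.
set S := \sum_(i <- s) `|f i|. set T := \sum_(i <- s) f i ^+ 2.
rewrite sqrrD -addrA lerD2l; apply: le_trans IH _; rewrite lerDr.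
by rewrite mulrn_wge0 // mulr_ge0.
Qed.

Lemma enorm_L1 (R : archiRcfType) n (v : 'cV[R]_n) : enorm v <= L1 v.
Proof.
rewrite /enorm -(ger0_norm (L1_ge0 v)) -sqrtr_sqr.
apply: ler_wsqrtr. exact: sum_sq_le.
Qed.

Lemma abs_le_enorm (R : archiRcfType) n (v : 'cV[R]_n) i : `|v i 0| <= enorm v.
Proof.
rewrite /enorm -sqrtr_sqr; apply: ler_wsqrtr.
rewrite (bigD1 i) //= lerDl; apply: sumr_ge0 => j _; exact: sqr_ge0.
Qed.

Lemma L1_le_enorm (R : archiRcfType) n (v : 'cV[R]_n) : L1 v <= n%:R * enorm v.
Proof.
rewrite /L1 mulr_natl -[n in _ *+ n]card_ord -sumr_const; apply: ler_sum => i _; exact: abs_le_enorm.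
Qed.

Lemma cd_le (R : realDomainType) n (c v : 'cV[R]_n) : `|cd c v| <= L1 c * L1 v.
Proof.
rewrite /cd /L1 mulr_sumr; apply: le_trans (ler_norm_sum _ _ _) _.
apply: ler_sum => i _; rewrite normrM ler_wpM2r //.
by rewrite (bigD1 i) //= lerDl sumr_ge0.
Qed.

Lemma L1N (R : realDomainType) n (v : 'cV[R]_n) : L1 (- v) = L1 v.
Proof. by rewrite -scaleN1r L1Z normrN1 mul1r. Qed.

Definition conf (R : realFieldType) n (w u : 'cV[R]_n) : Prop :=
  forall i, 0 <= w i 0 * u i 0 /\ (u i 0 = 0 -> w i 0 = 0).
Definition Pgood (R : realFieldType) m n (A : 'M[R]_(m, n)) c (u : 'cV[R]_n) : Prop :=
  forall v, A *m v = 0 -> conf v u -> (exists i, v i 0 != 0) -> 0 < cd c v.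
Definition inV (R : realFieldType) m n (A : 'M[R]_(m, n)) (J : {set 'I_n}) (v : 'cV[R]_n) : Prop :=
  A *m v = 0 /\ forall i, i \notin J -> v i 0 = 0.
Definition Elem (R : realFieldType) m n (A : 'M[R]_(m, n)) J (v : 'cV[R]_n) : Prop :=
  inV A J v /\ (exists i, v i 0 != 0) /\
  forall v', inV A J v' -> exists t, forall i, v' i 0 = t * v i 0.
Definition scaled (R : realFieldType) n (w u : 'cV[R]_n) : Prop :=
  forall i, exists k, 0 <= k /\ w i 0 = k * u i 0.

Lemma L1_gt0 (R : realFieldType) n (v : 'cV[R]_n) : (exists i, v i 0 != 0) -> 0 < L1 v.
Proof.
case=> i hi; rewrite /L1 (bigD1 i) //=.
have h1 : 0 < `|v i 0| by rewrite normr_gt0.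
have h2 : 0 <= \sum_(j < n | j != i) `|v j 0| by apply: sumr_ge0.
lra.
Qed.

Lemma muJ (R : realFieldType) m n (A : 'M[R]_(m, n)) c J :
  exists mu, 0 < mu /\ forall v, Elem A J v -> 0 < cd c v -> mu * L1 v <= cd c v.
Proof.
case: (classic (exists v0, Elem A J v0 /\ 0 < cd c v0)); last first.
  move=> h; exists 1; split=> // v ev cv; exfalso; apply: h; by exists v.
case=> v0 [e0 c0]; exists (cd c v0 / L1 v0).
have l0 : 0 < L1 v0 by apply: L1_gt0; case: e0 => _ [].
split; first by rewrite divr_gt0.
move=> v [iv [nz hall]] cv.
have [t ht] := hall v0 e0.1.
have ev : v0 = t *: v by apply/matrixP => i j; rewrite (ord1 j) mxE ht.
have tp : 0 < t.
  by move: c0; rewrite ev cdZ pmulr_lgt0.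
have lv : 0 < L1 v by apply: L1_gt0.
rewrite ev cdZ L1Z gtr0_norm //.
have -> : t * cd c v / (t * L1 v) * L1 v = cd c v.
  by field; rewrite ?gt_eqF.
by [].
Qed.

Lemma fin_unif (R : realFieldType) (T : finType) (Q : T -> R -> Prop) :
  (forall t, exists e, 0 < e /\ Q t e) ->
  (forall t e e', Q t e -> 0 < e' -> e' <= e -> Q t e') ->
  exists e, 0 < e /\ forall t, Q t e.
Proof.
move=> hex hmon.
suff [e [e0 he]] : exists e, 0 < e /\ forall t, t \in enum T -> Q t e.
  by exists e; split=> // t; apply: he; rewrite mem_enum.
elim: (enum T) => [|a s [e [e0 he]]]; first by exists 1.
have [ea [ea0 hea]] := hex a.
exists (Num.min e ea); split; first by rewrite lt_min e0 ea0.
move=> t; rewrite inE => /orP [/eqP -> | ts].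
  by apply: (hmon _ ea); rewrite ?lt_min ?e0 ?ea0 ?ge_min ?lexx ?orbT.
by apply: (hmon _ e); [apply: he | rewrite lt_min e0 ea0 | rewrite ge_min lexx].
Qed.

Lemma argmin_ex (R : realFieldType) (I : finType) (P : pred I) (f : I -> R) i0 :
  P i0 -> exists j, P j /\ forall i, P i -> f j <= f i.
Proof.
move=> hi0.
suff [j [hj hm]] : exists j, P j /\ forall i, i \in enum I -> P i -> f j <= f i.
  by exists j; split=> // i; apply: hm; rewrite mem_enum.
elim: (enum I) => [|a s [j [hj hm]]]; first by exists i0.
case: (boolP (P a)) => Pa; last first.
  exists j; split=> // i; rewrite inE => /orP [/eqP -> | ts] Pi; last exact: hm.
  by rewrite Pi in Pa.
case: (leP (f a) (f j)) => h.
  exists a; split=> // i; rewrite inE => /orP [/eqP -> | ts] Pi; first by [].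
  by apply: le_trans h (hm _ ts Pi).
exists j; split=> // i; rewrite inE => /orP [/eqP -> | ts] Pi; last exact: hm.
exact: ltW.
Qed.

Lemma scaled_zero (R : realFieldType) n (w u : 'cV[R]_n) i :
  scaled w u -> u i 0 = 0 -> w i 0 = 0.
Proof. by move=> /(_ i) [k [_ ->]] ->; rewrite mulr0. Qed.

Lemma scaled_Pgood (R : realFieldType) m n (A : 'M[R]_(m, n)) c (w u : 'cV[R]_n) :
  scaled w u -> Pgood A c u -> Pgood A c w.
Proof.
move=> hs hP v hv hc hnz; apply: hP => // i.
have [k [k0 hk]] := hs i.
have [h1 h2] := hc i.
split; last by move=> u0; apply: h2; rewrite hk u0 mulr0.
have [kz|kp] : k = 0 \/ 0 < k.
  by move: k0; rewrite le_eqVlt => /orP [/eqP <-|]; [left|right].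
  by rewrite kz mul0r in hk; rewrite (h2 hk) mul0r.
by move: h1; rewrite hk mulrCA pmulr_rge0.
Qed.

Lemma all_zero_bound (R : realFieldType) n (c u : 'cV[R]_n) mu :
  (forall i, u i 0 = 0) -> mu * L1 u <= cd c u.
Proof.
move=> h; rewrite /L1 /cd big1 ?mulr0; last by move=> i _; rewrite h normr0.
by rewrite big1 // => i _; rewrite h mulr0.
Qed.

Lemma key_bound (R : realFieldType) m n (A : 'M[R]_(m, n)) c :
  exists mu, 0 < mu /\ forall u, A *m u = 0 -> Pgood A c u -> mu * L1 u <= cd c u.
Proof.
have [mu [mu0 hmu]] := @fin_unif _ _
  (fun J e => forall v, Elem A J v -> 0 < cd c v -> e * L1 v <= cd c v)
  (fun J => muJ A c J)
  (fun J e e' h e'0 le => fun v ev cv => le_trans (ler_wpM2r (L1_ge0 v) le) (h v ev cv)).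
exists mu; split=> //.
suff H : forall k (u : 'cV[R]_n), leq #|[set i | u i 0 != 0]| k -> A *m u = 0 ->
  Pgood A c u -> mu * L1 u <= cd c u.
  by move=> u; apply: (H #|[set i | u i 0 != 0]|).
elim=> [|k IH] u hk hA hP.
  apply: all_zero_bound => i; apply/eqP; apply: contraTT hk => hi.
  by rewrite -ltnNge card_gt0; apply/set0Pn; exists i; rewrite inE.
case: (boolP [exists i, u i 0 != 0]); last first.
  move=> h; apply: all_zero_bound => i; apply/eqP; apply: contraNT h => hi.
  by apply/existsP; exists i.
move=> /existsP [i0 hi0].
set J := [set i | u i 0 != 0].
case: (classic (exists v : 'cV[R]_n, A *m v = 0 /\ (forall i, u i 0 = 0 -> v i 0 = 0) /\
                  forall t, exists i, v i 0 != t * u i 0)); last first.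
  move=> hno.
  have eu : Elem A J u.
    split; first by split=> // i; rewrite inE negbK => /eqP.
    split; first by exists i0.
    move=> v' [hA' hJ']; apply: NNPP => hnot; apply: hno; exists v'.
    split=> //; split; first by move=> i ui; apply: hJ'; rewrite inE ui eqxx.
    move=> t; apply: NNPP => h2; apply: hnot; exists t => i.
    apply: NNPP => h3; apply: h2; exists i; by apply/eqP.
  apply: (hmu J u eu); apply: hP => //; last by exists i0.
  by move=> i; split=> // ; rewrite -expr2 sqr_ge0.
case=> v [hAv [hsupp hnp]].
set r := fun j => v j 0 / u j 0.
have [jmin [Pmin hmin]] := @argmin_ex _ _ (fun j => u j 0 != 0) r i0 hi0.
have [jmax [Pmax hmax]] := @argmin_ex _ _ (fun j => u j 0 != 0) (fun j => - r j) i0 hi0.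
have vr : forall j, u j 0 != 0 -> v j 0 = r j * u j 0.
  by move=> j hj; rewrite /r divfK.
have rlt : r jmin < r jmax.
  rewrite ltNge; apply/negP => hle.
  have [i hi] := hnp (r jmin); apply/negP: hi; apply/negPn/eqP.
  case: (boolP (u i 0 != 0)) => ui.
    rewrite vr //; congr (_ * _); apply/eqP; rewrite eq_le hmin // andbT.
    by apply: le_trans hle; rewrite -lerN2 hmax.
  by move/negPn/eqP: ui => ui; rewrite ui mulr0 hsupp.
set w1 := v - r jmin *: u.
set w2 := r jmax *: u - v.
have sc1 : scaled w1 u.
  move=> i; case: (boolP (u i 0 != 0)) => ui.
    exists (r i - r jmin); split; first by rewrite subr_ge0 hmin.
    by rewrite !mxE vr //; ring.
  exists 0; split=> //; move/negPn/eqP: ui => ui.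
  by rewrite !mxE ui hsupp // mulr0 mul0r subr0.
have sc2 : scaled w2 u.
  move=> i; case: (boolP (u i 0 != 0)) => ui.
    exists (r jmax - r i); split; first by rewrite subr_ge0 -lerN2 hmax.
    by rewrite !mxE vr //; ring.
  exists 0; split=> //; move/negPn/eqP: ui => ui.
  by rewrite !mxE ui hsupp // mulr0 mul0r subr0.
have hcard : forall w, scaled w u -> forall j, u j 0 != 0 -> w j 0 = 0 ->
    leq #|[set i | w i 0 != 0]| k.
  move=> w sw j uj wj; rewrite -ltnS; apply: leq_trans hk; apply: proper_card.
  apply/properP; split.
    apply/subsetP => i; rewrite !inE; apply: contra => /eqP ui.
    by apply/eqP; apply: scaled_zero sw ui.
  by exists j; rewrite !inE ?uj ?wj ?eqxx.
have hw1 : mu * L1 w1 <= cd c w1.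
  apply: IH; last exact: scaled_Pgood hP.
    apply: (hcard _ sc1 jmin Pmin); by rewrite !mxE vr //; ring.
  by rewrite /w1 mulmxBr -scalemxAr hA hAv scaler0 subr0.
have hw2 : mu * L1 w2 <= cd c w2.
  apply: IH; last exact: scaled_Pgood hP.
    apply: (hcard _ sc2 jmax Pmax); by rewrite !mxE vr //; ring.
  by rewrite /w2 mulmxBr -scalemxAr hA hAv scaler0 subr0.
have ew : w1 + w2 = (r jmax - r jmin) *: u.
  by apply/matrixP => i j; rewrite !mxE; ring.
have dpos : 0 < r jmax - r jmin by rewrite subr_gt0.
have eL : (r jmax - r jmin) * L1 u = L1 ((r jmax - r jmin) *: u) by rewrite L1Z gtr0_norm.
rewrite -(ler_pM2l dpos) mulrCA eL -cdZ -ew cdD.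
apply: le_trans (lerD hw1 hw2); rewrite -mulrDr; apply: ler_wpM2l; [exact: ltW | exact: L1D].
Qed.

Lemma unit_M (R : archiRcfType) m n (A : 'M[R]_(m, n)) (x : 'cV[R]_n) :
  \rank A = m -> (forall i, x i 0 != 0) -> A *m Xsq x *m A^T \in unitmx.
Proof.
move=> hr hx; rewrite -row_free_unit; apply: inj_row_free => z hz.
have e : (z *m A *m Xsq x *m (z *m A)^T) 0 0 = 0.
  by rewrite trmx_mul !mulmxA -(mulmxA z) -(mulmxA z) hz mul0mx mxE.
move: e; set w := z *m A; rewrite /Xsq mul_mx_diag mxE => e.
have e' : \sum_j (w 0 j ^+ 2 * x j 0 ^+ 2) = 0.
  by apply: etrans e; apply: eq_bigr => j _; rewrite !mxE; ring.
have w0 : forall j, w 0 j = 0.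
  move=> j.
  have nn : forall i : 'I_n, xpredT i -> 0 <= w 0 i ^+ 2 * x i 0 ^+ 2.
    by move=> i _; apply: mulr_ge0; exact: sqr_ge0.
  have h := @psumr_eq0P _ _ xpredT (fun j => w 0 j ^+ 2 * x j 0 ^+ 2) nn e' j isT.
  have xj : x j 0 ^+ 2 != 0 by rewrite expf_neq0.
  apply/eqP; move/eqP: h; rewrite mulf_eq0 (negbTE xj) orbF expf_eq0 //.
have : z *m A = 0 by apply/matrixP => i j; rewrite (ord1 i) w0 mxE.
have rf : row_free A by rewrite /row_free hr.
by move/eqP; rewrite mulmx_free_eq0 // => /eqP.
Qed.

Lemma Au0 (R : archiRcfType) m n (A : 'M[R]_(m, n)) c (x : 'cV[R]_n) :
  A *m Xsq x *m A^T \in unitmx -> A *m (Xsq x *m slack A c x) = 0.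
Proof.
move=> hu; rewrite /slack /dual_y mulmxBr mulmxA mulmxBr !mulmxA.
by rewrite mulmxV // mul1mx subrr.
Qed.

Lemma cdT (R : realDomainType) n (w v : 'cV[R]_n) : cd w v = (w^T *m v) 0 0.
Proof. by rewrite /cd !mxE; apply: eq_bigr => i _; rewrite mxE. Qed.

Lemma cd_null (R : archiRcfType) m n (A : 'M[R]_(m, n)) c (x v : 'cV[R]_n) :
  A *m v = 0 -> cd c v = cd (slack A c x) v.
Proof.
move=> hv; rewrite !cdT /slack linearB /= mulmxBl trmx_mul trmxK -mulmxA hv mulmx0.
by rewrite subr0.
Qed.

Lemma u_entry (R : archiRcfType) n (x s : 'cV[R]_n) i :
  (Xsq x *m s) i 0 = x i 0 ^+ 2 * s i 0.
Proof. by rewrite /Xsq mul_diag_mx !mxE. Qed.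

Lemma Pgood_u (R : archiRcfType) m n (A : 'M[R]_(m, n)) c (x : 'cV[R]_n) :
  (forall i, x i 0 != 0) -> A *m Xsq x *m A^T \in unitmx ->
  Pgood A c (Xsq x *m slack A c x).
Proof.
move=> hx hu v hv hc [i0 hi0].
rewrite (@cd_null _ _ _ A c x v hv) /cd.
set s := slack A c x.
have xp : forall i, 0 < x i 0 ^+ 2 by move=> i; rewrite lt0r sqr_ge0 expf_neq0 ?hx.
have nn : forall i, 0 <= s i 0 * v i 0.
  move=> i; have [h1 _] := hc i; move: h1; rewrite u_entry.
  have -> : v i 0 * (x i 0 ^+ 2 * s i 0) = x i 0 ^+ 2 * (s i 0 * v i 0) by ring.
  by rewrite pmulr_rge0.
have p0 : 0 < s i0 0 * v i0 0.
  have [h1 h2] := hc i0.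
  have ui : (Xsq x *m s) i0 0 != 0 by apply: contra hi0 => /eqP /h2 ->.
  have : 0 < v i0 0 * (Xsq x *m s) i0 0 by rewrite lt0r mulf_neq0.
  have -> : v i0 0 * (Xsq x *m s) i0 0 = x i0 0 ^+ 2 * (s i0 0 * v i0 0).
    by rewrite u_entry; ring.
  by rewrite pmulr_rgt0.
rewrite (bigD1 i0) //=.
have : 0 <= \sum_(i < n | i != i0) s i 0 * v i 0 by apply: sumr_ge0.
move: p0; set a := s i0 0 * v i0 0; lra.
Qed.

Lemma bigmax0_ge0 (R : realDomainType) n (F : 'I_n -> R) : 0 <= \big[Num.max/0]_(i < n) F i.
Proof. by apply: (big_rec (fun y => 0 <= y)) => // i y _ hy; rewrite le_max hy orbT. Qed.

Lemma step_bound (R : archiRcfType) m n (A : 'M[R]_(m, n)) c alpha (x : 'cV[R]_n) mu :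
  \rank A = m -> (forall i, 0 < x i 0) -> 0 <= alpha ->
  (forall u, A *m u = 0 -> Pgood A c u -> mu * L1 u <= cd c u) ->
  mu * L1 (afs_step A c alpha x) <= - cd c (afs_step A c alpha x).
Proof.
move=> hr hx ha hmu.
have hx' : forall i, x i 0 != 0 by move=> i; rewrite gt_eqF.
have hu := unit_M hr hx'.
have hb := hmu _ (@Au0 _ _ _ A c x hu) (@Pgood_u _ _ _ A c x hx' hu).
have g0 : 0 <= alpha / gam (Xmul x (slack A c x)) by rewrite divr_ge0 // bigmax0_ge0.
rewrite /afs_step cdN opprK cdZ L1N L1Z ger0_norm // mulrCA.
by apply: ler_wpM2l.
Qed.

Lemma pair_bound (R : archiRcfType) m n (A : 'M[R]_(m, n)) c alpha beta x0 mu :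
  \rank A = m -> 0 <= alpha -> 0 <= beta ->
  (forall k i, 0 < gafs A c alpha beta x0 k i 0) ->
  0 < mu -> (forall u, A *m u = 0 -> Pgood A c u -> mu * L1 u <= cd c u) ->
  forall k, let p := gafs_pair A c alpha beta x0 k in
    mu * L1 (p.2 - p.1) <= cd c p.1 - cd c p.2.
Proof.
move=> hr ha hb hpos mu0 hmu; elim=> [|k IH] /=.
  rewrite addrAC subrr add0r cdD opprD addrA subrr add0r.
  apply: step_bound => //; exact: (hpos 0%N).
move: IH => /=; set p := gafs_pair A c alpha beta x0 k => IH.
set co := beta / ninf_scaled p.2 (p.2 - p.1).
have co0 : 0 <= co by rewrite divr_ge0 // bigmax0_ge0.
have hp2 : forall i, 0 < p.2 i 0 by move=> i; exact: (hpos k.+1 i).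
have hs := step_bound hr hp2 ha hmu.
have -> : p.2 + afs_step A c alpha p.2 + co *: (p.2 - p.1) - p.2 =
          afs_step A c alpha p.2 + co *: (p.2 - p.1).
  by rewrite addrAC [p.2 + _]addrC addrK.
rewrite !cdD cdZ.
apply: le_trans (ler_wpM2l (ltW mu0) (L1D _ _)) _.
rewrite mulrDr L1Z ger0_norm // mulrCA.
have := ler_wpM2l co0 IH.
rewrite cdB !mulrBr; move: hs.
set a := mu * L1 _; set b := co * (mu * _); lra.
Qed.

Lemma gafs_bound (R : archiRcfType) m n (A : 'M[R]_(m, n)) c alpha beta x0 xstar mu :
  \rank A = m -> 0 <= alpha -> 0 <= beta ->
  (forall k i, 0 < gafs A c alpha beta x0 k i 0) ->
  0 < mu -> (forall u, A *m u = 0 -> Pgood A c u -> mu * L1 u <= cd c u) ->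
  (forall eps : R, 0 < eps -> exists K : nat, forall k, (K <= k)%N ->
       enorm (gafs A c alpha beta x0 k - xstar) < eps) ->
  forall k, mu * L1 (gafs A c alpha beta x0 k - xstar) <=
            cd c (gafs A c alpha beta x0 k) - cd c xstar.
Proof.
move=> hr ha hb hpos mu0 hmu hlim k.
set g := gafs A c alpha beta x0.
have st : forall k, mu * L1 (g k.+1 - g k) <= cd c (g k) - cd c (g k.+1).
  by move=> k'; exact (pair_bound hr ha hb hpos mu0 hmu k').
have tel : forall j, mu * L1 (g (k + j)%N - g k) <= cd c (g k) - cd c (g (k + j)%N).
  elim=> [|j IH]; first by rewrite addn0 subrr /L1 big1 ?mulr0 ?subrr // => i _; rewrite mxE normr0.
  rewrite addnS.
  have e : g (k + j).+1 - g k = (g (k + j).+1 - g (k + j)%N) + (g (k + j)%N - g k).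
    by rewrite addrA subrK.
  rewrite e; apply: le_trans (ler_wpM2l (ltW mu0) (L1D _ _)) _.
  rewrite mulrDr; have := st (k + j)%N; move: IH; lra.
set K1 := n%:R * (mu + L1 c) + 1.
have K1p : 0 < K1.
  have l0 := L1_ge0 c.
  have : 0 <= n%:R * (mu + L1 c) by apply: mulr_ge0; [exact: ler0n | lra].
  rewrite /K1; lra.
apply/ler_addgt0Pr => e e0.
have [K0 hK0] := hlim (e / K1) (divr_gt0 e0 K1p).
have hy := hK0 (k + K0)%N (leq_addl _ _).
set Y := g (k + K0)%N in hy *.
have hL : L1 (Y - xstar) <= n%:R * (e / K1).
  apply: le_trans (L1_le_enorm _) _; apply: ler_wpM2l => //; exact: ltW.
have e1 : g k - xstar = - (Y - g k) + (Y - xstar) by rewrite opprB addrA subrK.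
have t1 := tel K0.
have hc : cd c xstar - cd c Y <= L1 c * L1 (Y - xstar).
  apply: le_trans (cd_le c (Y - xstar)); rewrite cdB -normrN opprB; exact: ler_norm.
have l0 := L1_ge0 c.
have h3 : (mu + L1 c) * L1 (Y - xstar) <= e.
  have mp : 0 <= mu + L1 c by lra.
  apply: le_trans (ler_wpM2l mp hL) _.
  have k2 : n%:R * (mu + L1 c) <= K1 by rewrite /K1 lerDl.
  rewrite (_ : (mu + L1 c) * (n%:R * (e / K1)) = (n%:R * (mu + L1 c)) * (e / K1)); last by ring.
  apply: le_trans (ler_wpM2r (ltW (divr_gt0 e0 K1p)) k2) _.
  by rewrite mulrC divfK ?gt_eqF.
rewrite e1; apply: le_trans (ler_wpM2l (ltW mu0) (L1D _ _)) _.
rewrite L1N mulrDr; move: h3; rewrite mulrDl; move: t1 hc.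
set L := L1 (Y - xstar); set L' := L1 (Y - g k); lra.
Qed.

Theorem theorem5 (R : archiRcfType) (m n : nat)
    (A : 'M[R]_(m, n)) (b : 'cV[R]_m) (c : 'cV[R]_n)
    (alpha beta : R) (x0 xstar : 'cV[R]_n) :
  (* standing assumptions *)
  \rank A = m ->
  (exists x : 'cV[R]_n, A *m x = b /\ forall i, 0 < x i 0) ->
  (exists x1 x2 : 'cV[R]_n, feasible A b x1 /\ feasible A b x2 /\
                            cost c x1 <> cost c x2) ->
  (exists xo : 'cV[R]_n, feasible A b xo /\
       forall z, feasible A b z -> cost c xo <= cost c z) ->
  (* parameters and starting point *)
  inQ alpha beta ->
  (forall i, 0 < x0 i 0) -> A *m x0 = b ->
  (* all quantities of the GAFS iteration are well defined *)
  (forall k i, 0 < gafs A c alpha beta x0 k i 0) ->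
  (forall k, exists i, 0 < Xmul (gafs A c alpha beta x0 k)
                              (slack A c (gafs A c alpha beta x0 k)) i 0) ->
  (forall k, gafs A c alpha beta x0 k.+1 != gafs A c alpha beta x0 k) ->
  (* x* = lim_k x_k *)
  (forall eps : R, 0 < eps -> exists K : nat, forall k, (K <= k)%N ->
       enorm (gafs A c alpha beta x0 k - xstar) < eps) ->
  exists delta Rb : R, 0 < delta /\ 0 < Rb /\
    forall k : nat,
      let xk := gafs A c alpha beta x0 k in
      let gap := cost c xk - cost c xstar in
      enorm (xk - xstar) <= Rb * gap /\
      delta * (\sum_(i < n | xstar i 0 == 0) xk i 0) <= gap /\
      delta * (\sum_(i < n | 0 < xstar i 0) `|xk i 0 - xstar i 0|) <= gap.
Proof.
move=> hr _ _ _ hQ hx0 _ hpos _ _ hlim.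
case: hQ => /andP [a0 _] [b0 _].
have [mu [mu0 hmu]] := key_bound A c.
exists mu, mu^-1; split=> //; split; first by rewrite invr_gt0.
move=> k; cbv zeta; rewrite !cost_cd.
have hb := gafs_bound hr (ltW a0) b0 hpos mu0 hmu hlim k.
set xk := gafs A c alpha beta x0 k in hb *.
have hsplit : forall P : pred 'I_n,
    \sum_(i < n | P i) `|xk i 0 - xstar i 0| <= L1 (xk - xstar).
  move=> P; rewrite /L1 [X in _ <= X](bigID P) /=.
  have e : \sum_(i < n | P i) `|(xk - xstar) i 0| = \sum_(i < n | P i) `|xk i 0 - xstar i 0|.
    by apply: eq_bigr => i _; rewrite !mxE.
  rewrite -e lerDl; exact: sumr_ge0.
split.
  apply: le_trans (enorm_L1 _) _.
  by rewrite -(ler_pM2l mu0) mulrA mulfV ?gt_eqF // mul1r.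
split.
  apply: le_trans hb; apply: ler_wpM2l; first exact: ltW.
  apply: le_trans (hsplit (fun i => xstar i 0 == 0)); apply: ler_sum => i /eqP ->.
  by rewrite subr0 ler_norm.
apply: le_trans hb; apply: ler_wpM2l; first exact: ltW.
exact: hsplit.
Qed.
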